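(* Fix $m\ge1$, $n\ge0$ and $i\in Ag$. Every labelled sequent derivable in $\mathsf{G3Ldm}_{n}^{m}+\mathsf{PR}$ is derivable in $\mathsf{G3Ldm}_{n}^{m}+\mathsf{PR}$ without any use of the rule $(\mathsf{eucl}_i)$.
   Context: Language. $Ag=\{1,\dots,m\}$, $Var$ a countable set of propositional variables; formulas $\phi ::= p \mid \overline{p} \mid (\phi\wedge\phi) \mid (\phi\vee\phi) \mid \Box\phi \mid \Diamond\phi \mid [i]\phi \mid \langle i\rangle\phi$. Labelled sequents $\mathcal{R},\Gamma$: $\mathcal{R}$ a multiset of relational atoms $\mathcal{R}_ixy$, $\Gamma$ a multiset of labelled formulas $x:\phi$. Derivations are finite trees whose leaves are $(\mathsf{id})$ instances. Rules of $\mathsf{G3Ldm}_{n}^{m}$ (premise(s) / conclusion): $(\mathsf{id})$: / $\mathcal{R}, w:p, w:\overline{p},\Gamma$. $(\wedge)$: $\mathcal{R}, w:\phi\wedge\psi, w:\phi,\Gamma$ and $\mathcal{R}, w:\phi\wedge\psi, w:\psi,\Gamma$ / $\mathcal{R}, w:\phi\wedge\psi,\Gamma$. $(\vee)$: $\mathcal{R}, w:\phi\vee\psi, w:\phi, w:\psi,\Gamma$ / $\mathcal{R}, w:\phi\vee\psi,\Gamma$. $([i])$: $\mathcal{R},\mathcal{R}_iwv, v:\phi,\Gamma$ / $\mathcal{R}, w:[i]\phi,\Gamma$ ($v$ fresh). $(\Box)$: $\mathcal{R}, w:\Box\phi, v:\phi,\Gamma$ / $\mathcal{R}, w:\Box\phi,\Gamma$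 ($v$ fresh). $(\Diamond)$: $\mathcal{R}, w:\Diamond\phi, u:\phi,\Gamma$ / $\mathcal{R}, w:\Diamond\phi,\Gamma$. $(\mathsf{IOA})$: $\mathcal{R},\mathcal{R}_1u_1v,\dots,\mathcal{R}_mu_mv,\Gamma$ / $\mathcal{R},\Gamma$ ($v$ fresh). $(\langle i\rangle)$: $\mathcal{R},\mathcal{R}_iwu, w:\langle i\rangle\phi, u:\phi,\Gamma$ / $\mathcal{R},\mathcal{R}_iwu, w:\langle i\rangle\phi,\Gamma$. $(\mathsf{refl}_i)$: $\mathcal{R},\mathcal{R}_iww,\Gamma$ / $\mathcal{R},\Gamma$. $(\mathsf{eucl}_i)$: $\mathcal{R},\mathcal{R}_iwu,\mathcal{R}_iwv,\mathcal{R}_iuv,\Gamma$ / $\mathcal{R},\mathcal{R}_iwu,\mathcal{R}_iwv,\Gamma$. $(\mathsf{APC}^i_n)$ (only if $n>0$): premises $\mathcal{R},\mathcal{R}_iw_kw_j,\Gamma$ for all $0\le k\le n-1$, $k+1\le j\le n$ / $\mathcal{R},\Gamma$. ''Fresh'' means not occurring in the conclusion. One copy of the indexed rules for each agent. $\mathsf{G3Ldm}_{n}^{m}+\mathsf{PR}$ adds, for each $i\in Ag$, the propagation rule $(\mathsf{Pr}_i)$: $\mathcal{R}, w:\langle i\rangle\phi, u:\phi,\Gamma$ / $\mathcal{R}, w:\langle i\rangle\phi,\Gamma$, applicable only if $w=u$ or there are labels $w=z_0,\dots,z_k=u$ ($k\ge1$) with $\mathcal{R}_iz_lz_{l+1}\in\mathcal{R}$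 or $\mathcal{R}_iz_{l+1}z_l\in\mathcal{R}$ for each $l<k$. *)

(* Defs.v *)
From Stdlib Require Import List Permutation Arith Lia Relations.
Import ListNotations.

Inductive formula : Type :=
| Var  : nat -> formula
| NVar : nat -> formula
| And  : formula -> formula -> formula
| Or   : formula -> formula -> formula
| Box  : formula -> formula             (* settled true *)
| Dia  : formula -> formula
| Stit : nat -> formula -> formula
| Poss : nat -> formula -> formula.

Record relatom : Type := Rel { ragent : nat; rsrc : nat; rtgt : nat }.

Definition lform : Type := (nat * formula)%type.

Fixpoint fagents (A : formula) : list nat :=
  match A with
  | Var _ | NVar _ => []
  | And A B | Or A B => fagents A ++ fagents B
  | Box A | Dia A => fagents A
  | Stit i A | Poss i A => i :: fagents A
  end.

Definition agent_ok (m i : nat) : Prop := 1 <= i <= m.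

Definition wf_sequent (m : nat) (R : list relatom) (G : list lform) : Prop :=
  (forall a, In a R -> agent_ok m (ragent a)) /\
  (forall x A i, In (x, A) G -> In i (fagents A) -> agent_ok m i).

Definition occurs (v : nat) (R : list relatom) (G : list lform) : Prop :=
  (exists a, In a R /\ (rsrc a = v \/ rtgt a = v)) \/
  (exists A, In (v, A) G).

Definition istep (i : nat) (R : list relatom) (x y : nat) : Prop :=
  In (Rel i x y) R \/ In (Rel i y x) R.

Definition ipath (i : nat) (R : list relatom) : nat -> nat -> Prop :=
  clos_refl_trans nat (istep i R).

(* Derivability in G3Ldm_n^m + PR, where the euclidean rule (eucl_j) is
   available exactly for the agents j with [E j].  Sequents are multisets,
   represented by lists; [d_exch] makes derivability invariant under
   reordering (i.e. it identifies lists with the same multiset). *)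
Inductive deriv (m n : nat) (E : nat -> Prop)
  : list relatom -> list lform -> Prop :=
| d_exch R R' G G' :
    Permutation R R' -> Permutation G G' ->
    deriv m n E R G -> deriv m n E R' G'
| d_id R G w p :
    deriv m n E R ((w, Var p) :: (w, NVar p) :: G)
| d_and R G w A B :
    deriv m n E R ((w, And A B) :: (w, A) :: G) ->
    deriv m n E R ((w, And A B) :: (w, B) :: G) ->
    deriv m n E R ((w, And A B) :: G)
| d_or R G w A B :
    deriv m n E R ((w, Or A B) :: (w, A) :: (w, B) :: G) ->
    deriv m n E R ((w, Or A B) :: G)
| d_stit R G i w v A :
    agent_ok m i ->
    ~ occurs v R ((w, Stit i A) :: G) ->
    deriv m n E (Rel i w v :: R) ((v, A) :: G) ->
    deriv m n E R ((w, Stit i A) :: G)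
| d_box R G w v A :
    ~ occurs v R ((w, Box A) :: G) ->
    deriv m n E R ((w, Box A) :: (v, A) :: G) ->
    deriv m n E R ((w, Box A) :: G)
| d_dia R G w u A :
    deriv m n E R ((w, Dia A) :: (u, A) :: G) ->
    deriv m n E R ((w, Dia A) :: G)
| d_ioa R G (u : nat -> nat) v :
    ~ occurs v R G ->
    deriv m n E (map (fun j => Rel j (u j) v) (seq 1 m) ++ R) G ->
    deriv m n E R G
| d_poss R G i w u A :
    agent_ok m i ->
    deriv m n E (Rel i w u :: R) ((w, Poss i A) :: (u, A) :: G) ->
    deriv m n E (Rel i w u :: R) ((w, Poss i A) :: G)
| d_refl R G i w :
    agent_ok m i ->
    deriv m n E (Rel i w w :: R) G ->
    deriv m n E R G
| d_eucl R G i w u v :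
    agent_ok m i -> E i ->
    deriv m n E (Rel i w u :: Rel i w v :: Rel i u v :: R) G ->
    deriv m n E (Rel i w u :: Rel i w v :: R) G
| d_apc R G i (w : nat -> nat) :
    0 < n -> agent_ok m i ->
    (forall k j, k < j -> j <= n -> deriv m n E (Rel i (w k) (w j) :: R) G) ->
    deriv m n E R G
| d_pr R G i w u A :
    agent_ok m i ->
    ipath i R w u ->
    deriv m n E R ((w, Poss i A) :: (u, A) :: G) ->
    deriv m n E R ((w, Poss i A) :: G).

(* Main.v *)
Require Import Defs.
From Stdlib Require Import List Permutation Arith Lia Relations.
Import ListNotations.

Lemma occurs_mono v R R' G : incl R R' -> occurs v R G -> occurs v R' G.
Proof.
  intros Hi [[a [Ha H]]|H]; [left; exists a; auto | right; auto].
Qed.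

Lemma ipath_mono j R R' x y : incl R R' -> ipath j R x y -> ipath j R' x y.
Proof.
  intros Hi H; induction H.
  - apply rt_step. destruct H; [left|right]; auto.
  - apply rt_refl.
  - eapply rt_trans; eauto.
Qed.

Lemma ipath_sym j R x y : ipath j R x y -> ipath j R y x.
Proof.
  intros H; induction H.
  - apply rt_step. destruct H; [right|left]; auto.
  - apply rt_refl.
  - eapply rt_trans; eauto.
Qed.

Lemma in_perm (a x : relatom) R1 R0 : Permutation R1 (a :: R0) -> In x R1 -> x = a \/ In x R0.
Proof.
  intros P H. apply (Permutation_in _ P) in H. destruct H; auto.
Qed.

Lemma incl_perm (a : relatom) R1 R0 : Permutation R1 (a :: R0) -> incl R0 R1.
Proof.
  intros P x H. apply (Permutation_in _ (Permutation_sym P)). right; auto.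
Qed.

Lemma ipath_remove i u v j R1 R0 x y :
  Permutation R1 (Rel i u v :: R0) -> ipath i R0 u v ->
  ipath j R1 x y -> ipath j R0 x y.
Proof.
  intros P Hp H; induction H.
  - destruct H as [H|H]; destruct (in_perm _ _ _ _ P H) as [E|E].
    + inversion E; subst; auto.
    + apply rt_step; left; auto.
    + inversion E; subst; apply ipath_sym; auto.
    + apply rt_step; right; auto.
  - apply rt_refl.
  - eapply rt_trans; eauto.
Qed.

Lemma perm_extract (a x : relatom) R R0 :
  Permutation (x :: R) (a :: R0) -> x <> a ->
  exists R0', Permutation R0 (x :: R0') /\ Permutation R (a :: R0').
Proof.
  intros P Hne.
  assert (Hin : In x R0).
  { destruct (in_perm _ x _ _ P (or_introl eq_refl)); [congruence|auto]. }
  destruct (in_split _ _ Hin) as [l1 [l2 ->]].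
  exists (l1 ++ l2). split.
  - apply Permutation_sym, Permutation_middle.
  - apply (Permutation_cons_inv (a:=x)).
    eapply perm_trans; [exact P|].
    eapply perm_trans; [apply perm_skip, Permutation_sym, Permutation_middle|].
    apply perm_swap.
Qed.

Lemma remove_atom m n (E : nat -> Prop) i u v :
  ~ E i ->
  forall R1 G, deriv m n E R1 G ->
  forall R0, Permutation R1 (Rel i u v :: R0) -> ipath i R0 u v ->
  deriv m n E R0 G.
Proof.
  intros HE R1 G D. induction D; intros R0 P Hp.
  - eapply d_exch; [apply Permutation_refl| exact H0|].
    apply IHD; auto. eapply perm_trans; eauto.
  - apply d_id.
  - apply d_and; auto.
  - apply d_or; auto.
  - eapply d_stit with (v := v0); auto.
    + intro O; apply H0; eapply occurs_mono; [|exact O]. eapply incl_perm; eauto.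
    + apply IHD.
      * eapply perm_trans; [apply perm_skip, P|]. apply perm_swap.
      * eapply ipath_mono; [|exact Hp]. intros z Hz; right; auto.
  - apply d_box with (v := v0); auto.
    intro O; apply H; eapply occurs_mono; [|exact O]. eapply incl_perm; eauto.
  - eapply d_dia; auto.
  - eapply d_ioa with (u := u0) (v := v0).
    + intro O; apply H; eapply occurs_mono; [|exact O]. eapply incl_perm; eauto.
    + apply IHD.
      * eapply perm_trans; [apply Permutation_app_head, P|].
        apply Permutation_sym, Permutation_middle.
      * eapply ipath_mono; [|exact Hp]. intros z Hz; apply in_or_app; right; auto.
  - apply d_pr with (u := u0); [assumption| |].
    + destruct (in_perm _ (Rel i0 w u0) _ _ P (or_introl eq_refl)) as [Eq|Hin].
      * inversion Eq; subst; auto.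
      * apply rt_step; left; auto.
    + apply IHD; auto.
  - eapply d_refl; eauto. apply IHD.
    + eapply perm_trans; [apply perm_skip, P|]. apply perm_swap.
    + eapply ipath_mono; [|exact Hp]. intros z Hz; right; auto.
  - assert (Hne : i0 <> i) by (intro; subst; auto).
    destruct (perm_extract _ _ _ _ P) as [R0a [P1 P2]]; [congruence|].
    destruct (perm_extract _ _ _ _ P2) as [R0b [P3 P4]]; [congruence|].
    eapply d_exch; [apply Permutation_sym; eapply perm_trans; [exact P1|apply perm_skip, P3]
                   | apply Permutation_refl|].
    assert (Hinc : incl R0 (Rel i0 w u0 :: Rel i0 w v0 :: Rel i0 u0 v0 :: R0b)).
    { intros z Hz. apply (Permutation_in _ P1) in Hz. destruct Hz as [Hz|Hz]; [left; auto|].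
      apply (Permutation_in _ P3) in Hz. destruct Hz as [Hz|Hz]; [right; left; auto|].
      right; right; right; auto. }
    apply d_eucl; auto. apply IHD.
    + eapply perm_trans; [apply (Permutation_app_head [Rel i0 w u0; Rel i0 w v0; Rel i0 u0 v0] P4)|].
      apply Permutation_sym, (Permutation_middle [Rel i0 w u0; Rel i0 w v0; Rel i0 u0 v0]).
    + eapply ipath_mono; [exact Hinc|exact Hp].
  - apply (d_apc m n E R0 G i0 w); try assumption. intros k j Hk Hj. apply (H2 k j Hk Hj).
    + eapply perm_trans; [apply perm_skip, P|]. apply perm_swap.
    + eapply ipath_mono; [|exact Hp]. intros z Hz; right; auto.
  - apply d_pr with (u := u0); [assumption| |auto]. eapply ipath_remove; eauto.
Qed.

Theorem lemma3 (m n i : nat) (R : list relatom) (G : list lform) :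
  1 <= m -> agent_ok m i -> wf_sequent m R G ->
  deriv m n (fun _ => True) R G ->
  deriv m n (fun j => j <> i) R G.
Proof.
  intros _ _ _ D. induction D.
  - eapply d_exch; eauto.
  - apply d_id.
  - apply d_and; auto.
  - apply d_or; auto.
  - apply d_stit with (v := v); auto.
  - apply d_box with (v := v); auto.
  - apply d_dia with (u := u); auto.
  - apply d_ioa with (u := u) (v := v); auto.
  - apply d_poss; auto.
  - apply d_refl with (i := i0) (w := w); auto.
  - destruct (Nat.eq_dec i0 i) as [->|Hne].
    + eapply (remove_atom m n (fun j => j <> i) i u v); [tauto|exact IHD| |].
      * eapply perm_trans; [apply perm_skip, perm_swap|]. apply perm_swap.
      * eapply rt_trans; apply rt_step; [right; left; reflexivity| left; right; left; reflexivity].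
    + apply d_eucl; auto.
  - apply (d_apc m n _ R G i0 w); auto.
  - apply d_pr with (u := u); auto.
Qed.
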